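(* Let $A \in \mathbb{R}^{n\times n}$, $B\in\mathbb{R}^{n\times m}$, $C\in\mathbb{R}^{p\times n}$, and consider the deterministic linear system $x_{k+1}=Ax_k+Bu_k$, $y_k=Cx_k$, with constant reference $r_k = r_{ss}\in\mathbb{R}^p$. Let $Q\in\mathbb{R}^{p\times p}$ and $R\in\mathbb{R}^{m\times m}$ be positive definite. Assume that the pair $(A,\sqrt{Q}\,C)$ is observable and the pair $(A,B)$ is controllable. Let $(x_{ss},u_{ss})$ be a steady-state pair satisfying $$\begin{bmatrix} A-I & B\\ C & \mathbf{0}\end{bmatrix}\begin{bmatrix} x_{ss}\\ u_{ss}\end{bmatrix}=\begin{bmatrix}\mathbf{0}\\ r_{ss}\end{bmatrix},$$ and define the deviation variables $\tilde x_k=x_k-x_{ss}$, $\tilde u_k=u_k-u_{ss}$ (so that $\tilde x_{k+1}=A\tilde x_k+B\tilde u_k$). Define the stage cost $C(x_k,u_k)=x_k^\top C^\top Q C x_k+u_k^\top R u_k$, the steady-state cost $C_{ss}=x_{ss}^\top C^\top QC x_{ss}+u_{ss}^\top R u_{ss}$, and the cost index $$J(\tilde x_0)=\sum_{k=0}^\infty \left|C(x_k,u_k)-C_{ss}\right|.$$ Then there exists a value function $V(\tilde x_k)$ (namely the optimal cost $V(\tilde x_0)=\inf_{\{\tilde u_k\}} J(\tilde x_0)$, which is finite for all $\tilde x_0$) that satisfies the Bellman equation $$V(\tilde x_k)=\min_{\{u_k\}_{k=0}^\infty}\left\{\left|C(x_k,u_k)-C_{ss}\right|+V(\tilde x_{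k+1})\right\}.$$
   Context: This is an average-reward/cost formulation of optimal tracking control: the term $C_{ss}$ plays the role of the average cost, subtracted from the stage cost so that the infinite-horizon sum can be finite even though $u_k$ converges to a nonzero steady-state value $u_{ss}$. $I$ and $\mathbf{0}$ denote identity and zero matrices of appropriate dimensions. *)

(* Defs.v *)
From HB Require Import structures.
From mathcomp Require Import all_boot all_order all_algebra.
From mathcomp Require Import all_classical all_reals all_analysis.
Set Implicit Arguments. Unset Strict Implicit. Unset Printing Implicit Defensive.
Import Order.TTheory GRing.Theory Num.Theory.
Local Open Scope ring_scope.

Section Defs.
Variable R : realType.

Definition posdef (k : nat) (M : 'M[R]_k) : Prop :=
  M^T = M /\ forall x : 'cV[R]_k, x != 0 -> 0 < (x^T *m M *m x) 0 0.
Definition possemidef (k : nat) (M : 'M[R]_k) : Prop :=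
  M^T = M /\ forall x : 'cV[R]_k, 0 <= (x^T *m M *m x) 0 0.

Definition controllable (n m : nat) (A : 'M[R]_n) (B : 'M[R]_(n, m)) : Prop :=
  \rank (\mxrow_(i < n) (A ^+ i *m B)) = n.
Definition observable (n p : nat) (A : 'M[R]_n) (C : 'M[R]_(p, n)) : Prop :=
  \rank (\mxcol_(i < n) (C *m A ^+ i)) = n.

Fixpoint traj (n m : nat) (A : 'M[R]_n) (B : 'M[R]_(n, m)) (x0 : 'cV[R]_n)
  (u : nat -> 'cV[R]_m) (k : nat) : 'cV[R]_n :=
  match k with
  | 0 => x0
  | k'.+1 => A *m traj A B x0 u k' + B *m u k'
  end.

Definition stage (n m p : nat) (C : 'M[R]_(p, n)) (Q : 'M[R]_p) (Rw : 'M[R]_m)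
  (x : 'cV[R]_n) (u : 'cV[R]_m) : R :=
  (x^T *m C^T *m Q *m C *m x + u^T *m Rw *m u) 0 0.

(* cost index J(x~0) = sum_k |C(x_k,u_k) - C_ss|, for deviation initial state
   xt0 and deviation input sequence ut, with x_k = x~_k + x_ss, u_k = u~_k + u_ss *)
Definition Jcost (n m p : nat) (A : 'M[R]_n) (B : 'M[R]_(n, m)) (C : 'M[R]_(p, n))
  (Q : 'M[R]_p) (Rw : 'M[R]_m) (xss : 'cV[R]_n) (uss : 'cV[R]_m)
  (xt0 : 'cV[R]_n) (ut : nat -> 'cV[R]_m) : \bar R :=
  \sum_(0 <= k <oo)
    (`| stage C Q Rw (traj A B xt0 ut k + xss) (ut k + uss)
        - stage C Q Rw xss uss |)%:E.

Definition Vopt (n m p : nat) (A : 'M[R]_n) (B : 'M[R]_(n, m)) (C : 'M[R]_(p, n))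
  (Q : 'M[R]_p) (Rw : 'M[R]_m) (xss : 'cV[R]_n) (uss : 'cV[R]_m)
  (xt0 : 'cV[R]_n) : \bar R :=
  ereal_inf [set Jcost A B C Q Rw xss uss xt0 ut | ut in [set: nat -> 'cV[R]_m]].

End Defs.

(* Main.v *)
Require Import Defs.
From HB Require Import structures.
From mathcomp Require Import all_boot all_order all_algebra.
From mathcomp Require Import all_classical all_reals all_analysis.
From mathcomp Require Import ring lra.
Import Order.TTheory GRing.Theory Num.Theory.
Import numFieldNormedType.Exports.
Set Implicit Arguments. Unset Strict Implicit. Unset Printing Implicit Defensive.
Local Open Scope ring_scope.
Local Open Scope classical_set_scope.


Lemma traj_shift (R : realType) n m (A : 'M[R]_n) (B : 'M[R]_(n, m)) x0
  (u : nat -> 'cV[R]_m) k :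
  traj A B x0 u k.+1 = traj A B (A *m x0 + B *m u 0%N) (fun j => u j.+1) k.
Proof. by elim: k => [//|k IH]; rewrite -[LHS]/(A *m traj A B x0 u k.+1 + B *m u k.+1) IH. Qed.

Definition term (R : realType) n m p (A : 'M[R]_n) (B : 'M[R]_(n, m)) (C : 'M[R]_(p, n))
  (Q : 'M[R]_p) (Rw : 'M[R]_m) (xss : 'cV[R]_n) (uss : 'cV[R]_m)
  (xt0 : 'cV[R]_n) (ut : nat -> 'cV[R]_m) k : R :=
  `| stage C Q Rw (traj A B xt0 ut k + xss) (ut k + uss) - stage C Q Rw xss uss |.

Lemma JcostE (R : realType) n m p (A : 'M[R]_n) (B : 'M[R]_(n, m)) (C : 'M[R]_(p, n))
  (Q : 'M[R]_p) (Rw : 'M[R]_m) (xss : 'cV[R]_n) (uss : 'cV[R]_m) xt ut :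
  Jcost A B C Q Rw xss uss xt ut =
  (\sum_(0 <= k <oo) (term A B C Q Rw xss uss xt ut k)%:E)%E.
Proof. by []. Qed.

Lemma Jshift (R : realType) n m p (A : 'M[R]_n) (B : 'M[R]_(n, m)) (C : 'M[R]_(p, n))
  (Q : 'M[R]_p) (Rw : 'M[R]_m) (xss : 'cV[R]_n) (uss : 'cV[R]_m) xt ut :
  Jcost A B C Q Rw xss uss xt ut =
  ((term A B C Q Rw xss uss xt ut 0)%:E +
   Jcost A B C Q Rw xss uss (A *m xt + B *m ut 0%N) (fun j => ut j.+1))%E.
Proof.
rewrite !JcostE nneseries_recl //.
rewrite -(nneseries_addn 1) //.
- congr (_ + _)%E; apply: eq_eseriesr => k _.
  by rewrite /term addn1 traj_shift.
all: by move=> *; rewrite lee_fin /term.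
Qed.

Lemma J_ge0 (R : realType) n m p (A : 'M[R]_n) (B : 'M[R]_(n, m)) (C : 'M[R]_(p, n))
  (Q : 'M[R]_p) (Rw : 'M[R]_m) (xss : 'cV[R]_n) (uss : 'cV[R]_m) xt ut :
  (0 <= Jcost A B C Q Rw xss uss xt ut)%E.
Proof. by rewrite JcostE; apply: nneseries_ge0 => *; rewrite lee_fin /term. Qed.

Lemma V_ge0 (R : realType) n m p (A : 'M[R]_n) (B : 'M[R]_(n, m)) (C : 'M[R]_(p, n))
  (Q : 'M[R]_p) (Rw : 'M[R]_m) (xss : 'cV[R]_n) (uss : 'cV[R]_m) xt :
  (0 <= Vopt A B C Q Rw xss uss xt)%E.
Proof. by apply/ereal_infP => _ [ut _ <-]; exact: J_ge0. Qed.

Lemma V_le (R : realType) n m p (A : 'M[R]_n) (B : 'M[R]_(n, m)) (C : 'M[R]_(p, n))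
  (Q : 'M[R]_p) (Rw : 'M[R]_m) (xss : 'cV[R]_n) (uss : 'cV[R]_m) xt ut :
  (Vopt A B C Q Rw xss uss xt <= Jcost A B C Q Rw xss uss xt ut)%E.
Proof. by apply: ereal_inf_lbound; exists ut. Qed.

Lemma bellman_le (R : realType) n m p (A : 'M[R]_n) (B : 'M[R]_(n, m)) (C : 'M[R]_(p, n))
  (Q : 'M[R]_p) (Rw : 'M[R]_m) (xss : 'cV[R]_n) (uss : 'cV[R]_m) xt u :
  (Vopt A B C Q Rw xss uss xt <=
    (`| stage C Q Rw (xt + xss) u - stage C Q Rw xss uss |)%:E
     + Vopt A B C Q Rw xss uss (A *m xt + B *m (u - uss)))%E.
Proof.
set c := `| _ - _ |.
rewrite -leeBlDl //; apply/ereal_infP => _ [ut' _ <-].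
rewrite leeBlDl //.
pose ut := fun k => if k is k'.+1 then ut' k' else u - uss.
have := V_le A B C Q Rw xss uss xt ut; rewrite Jshift.
by rewrite /term /= subrK.
Qed.


Lemma traj_sum (R : realType) n m (A : 'M[R]_n) (B : 'M[R]_(n, m)) x0
  (u : nat -> 'cV[R]_m) k :
  traj A B x0 u k = A ^+ k *m x0 + \sum_(i < k) A ^+ (k - i.+1) *m B *m u i.
Proof.
have eS j : A ^+ j.+1 = A *m A ^+ j by rewrite exprS mulmxE.
elim: k => [|k IH]; first by rewrite big_ord0 expr0 mul1mx addr0.
rewrite -[LHS]/(A *m traj A B x0 u k + B *m u k) IH big_ord_recr /= subnn expr0 mul1mx.
rewrite mulmxDr mulmxA -eS addrA; congr (_ + _ + _).
rewrite mulmx_sumr; apply: eq_bigr => i _.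
rewrite !mulmxA -eS subSS; congr (_ ^+ _ *m _ *m _).
by rewrite -subSn ?subSS // ltn_ord.
Qed.

Lemma ctrl_reach (R : realType) n m (A : 'M[R]_n) (B : 'M[R]_(n, m)) :
  controllable A B -> forall v : 'cV[R]_n,
  exists w : 'cV[R]_(\sum_(i < n) m), \mxrow_(i < n) (A ^+ i *m B) *m w = v.
Proof.
rewrite /controllable => hr v.
set M := \mxrow_(i < n) _ in hr *.
have rf : row_full M^T by rewrite /row_full mxrank_tr hr.
have /submxP [D hD] : (v^T <= M^T)%MS by exact: submx_full.
exists D^T; by rewrite -[v]trmxK hD trmx_mul trmxK.
Qed.

Lemma J_fin_exists (R : realType) n m p (A : 'M[R]_n) (B : 'M[R]_(n, m)) (C : 'M[R]_(p, n))
  (Q : 'M[R]_p) (Rw : 'M[R]_m) (xss : 'cV[R]_n) (uss : 'cV[R]_m) :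
  controllable A B -> forall xt,
  exists ut, Jcost A B C Q Rw xss uss xt ut \is a fin_num.
Proof.
move=> hc xt.
have [w hw] := ctrl_reach hc (- (A ^+ n *m xt)).
pose ut k : 'cV[R]_m := if (insub k : option 'I_n) is Some i then submxcol w (rev_ord i) else 0.
have utE (i : 'I_n) : ut i = submxcol w (rev_ord i) by rewrite /ut valK.
have utN k : (n <= k)%N -> ut k = 0 by move=> hk; rewrite /ut insubN // -leqNgt.
have trn : traj A B xt ut n = 0.
  rewrite traj_sum.
  have -> : \sum_(i < n) A ^+ (n - i.+1) *m B *m ut i = - (A ^+ n *m xt).
    rewrite -hw -(submxcolK w) mul_mxrow_mxcol (reindex_inj rev_ord_inj).
    apply: eq_bigr => j _; rewrite (utE (rev_ord j)) rev_ordK /=.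
    by rewrite subnSK // subKn // ltnW.
  by rewrite subrr.
have trk d : traj A B xt ut (n + d) = 0.
  elim: d => [|d IH]; first by rewrite addn0.
  by rewrite addnS /= IH utN ?leq_addr // !mulmx0 addr0.
exists ut; rewrite JcostE (nneseries_split 0 n); last by move=> *; rewrite lee_fin /term.
rewrite [X in (_ + X)%E]eseries0; last first.
  move=> k hk _; rewrite /term.
  have [d ->] : exists d, k = (n + d)%N by exists (k - n)%N; rewrite subnKC.
  by rewrite trk utN ?leq_addr // !add0r subrr normr0.
by rewrite adde0 sumEFin.
Qed.


Lemma exist_min (R : realType) (I : eqType) (r : I -> R)
  (Jf : (I -> R) -> \bar R) (parts : nat -> {ptws I -> R} -> R) (v : R) :
  (forall N, continuous (parts N)) ->
  (forall g N, ((parts N g)%:E <= Jf g)%E) ->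
  (forall g c, (forall N, (parts N g)%:E <= c)%E -> (Jf g <= c)%E) ->
  (forall e, 0 < e -> exists g, (forall i, `|g i| <= r i) /\ (Jf g <= (v + e)%:E)%E) ->
  exists g, (Jf g <= v%:E)%E.
Proof.
move=> cont pJ Jp ex.
set P := [set g : {ptws I -> R} | forall i, `[- r i, r i]%classic (g i)].
have cP : compact P := tychonoff (fun i => @segment_compact R (- r i) (r i)).
set Fe := fun e : R => [set g | P g /\ (Jf g <= (v + e)%:E)%E].
set F := filter_from [set e : R | 0 < e] Fe.
have FF : ProperFilter F.
  apply: filter_from_proper.
    apply: filter_from_filter; first by exists 1; rewrite /= ltr01.
    move=> e1 e2 /= e10 e20; exists (Num.min e1 e2); first by rewrite /= lt_min e10.
    move=> g [Pg Jg]; split; split => //; apply: (le_trans Jg);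
      by rewrite lee_fin lerD2l ge_min lexx ?orbT.
  move=> e /= e0; have [g [gr Jg]] := ex e e0; exists g; split => //.
  by move=> i; rewrite /= in_itv /= -ler_norml.
have FP : F P by exists 1; rewrite /= ?ltr01 //; move=> g [].
have [g [Pg clg]] := cP F FF FP.
exists g; apply: Jp => N; rewrite lee_fin; apply/ler_addgt0Pr => e e0.
rewrite leNgt; apply/negP => ltp.
have nb : nbhs g (parts N @^-1` [set y | v + e < y]).
  apply: cont; apply: open_nbhs_nbhs; split => //; exact: open_gt.
have [h [[_ Jh] /= ph]] := clg _ _ (ex_intro2 _ _ e e0 (fun x (hx : Fe e x) => hx)) nb.
have := le_trans (pJ h N) Jh; rewrite lee_fin leNgt ph //.
Qed.


Lemma posdef_unit (R : realType) k (M : 'M[R]_k) : posdef M -> M \in unitmx.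
Proof.
move=> [_ hM]; rewrite unitmxE unitfE; apply/negP => /det0P [v v0 hv].
have vT0 : v^T != 0 by apply: contra v0 => /eqP h; rewrite -[v]trmxK h trmx0.
by have := hM _ vT0; rewrite trmxK hv mul0mx mxE ltxx.
Qed.

Lemma mxBE (R : realType) a b (X Y : 'M[R]_(a, b)) i j : (X - Y) i j = X i j - Y i j.
Proof. by rewrite !mxE. Qed.
Lemma mxDE (R : realType) a b (X Y : 'M[R]_(a, b)) i j : (X + Y) i j = X i j + Y i j.
Proof. by rewrite !mxE. Qed.
Lemma mxZE (R : realType) a b x (X : 'M[R]_(a, b)) i j : (x *: X) i j = x * X i j.
Proof. by rewrite !mxE. Qed.

Definition bf (R : realType) k (M : 'M[R]_k) (a c : 'cV[R]_k) : R := (a^T *m M *m c) 0 0.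

Lemma bfBl (R : realType) k (M : 'M[R]_k) a a' c : bf M (a - a') c = bf M a c - bf M a' c.
Proof. by rewrite /bf linearB /= !mulmxBl mxBE. Qed.
Lemma bfBr (R : realType) k (M : 'M[R]_k) a c c' : bf M a (c - c') = bf M a c - bf M a c'.
Proof. by rewrite /bf !mulmxBr mxBE. Qed.
Lemma bfZl (R : realType) k (M : 'M[R]_k) x a c : bf M (x *: a) c = x * bf M a c.
Proof. by rewrite /bf linearZ /= -!scalemxAl mxZE. Qed.
Lemma bfZr (R : realType) k (M : 'M[R]_k) x a c : bf M a (x *: c) = x * bf M a c.
Proof. by rewrite /bf -!scalemxAr mxZE. Qed.
Lemma bf_sym (R : realType) k (M : 'M[R]_k) a c : M^T = M -> bf M a c = bf M c a.
Proof.
move=> hM; rewrite /bf -[in RHS](trmxK (c^T *m M *m a)) [in RHS]mxE.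
by rewrite !trmx_mul hM trmxK mulmxA.
Qed.

Lemma CS_bound (R : realType) k (M : 'M[R]_k) (i : 'I_k) : posdef M ->
  exists2 d : R, 0 < d & forall w : 'cV[R]_k, (w i 0) ^+ 2 <= bf M w w * d.
Proof.
move=> hM; have hu := posdef_unit hM.
pose b : 'cV[R]_k := invmx M *m delta_mx i (0 : 'I_1).
have Mb : M *m b = delta_mx i 0 by rewrite /b mulmxA mulmxV // mul1mx.
have b0 : b != 0.
  apply/negP => /eqP hb; move: Mb; rewrite hb mulmx0 => /matrixP /(_ i 0).
  by rewrite !mxE !eqxx /= => /eqP; rewrite eq_sym oner_eq0.
have fwb w : bf M w b = w i 0.
  rewrite /bf -mulmxA Mb mxE (bigD1 i) //= big1 ?addr0.
    by rewrite !mxE !eqxx mulr1.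
  by move=> j hj; rewrite !mxE (negbTE hj) mulr0.
exists (bf M b b); first exact: (proj2 hM).
move=> w; set d := bf M b b; set x := w i 0.
have dpos : 0 < d by exact: (proj2 hM).
have := (proj2 hM) (d *: w - x *: b).
have h0 : 0 <= bf M (d *: w - x *: b) (d *: w - x *: b).
  have [->|nz] := eqVneq (d *: w - x *: b) 0.
    by rewrite /bf mulmx0 mxE.
  exact/ltW/(proj2 hM).
move=> _; move: h0.
rewrite bfBl !bfBr !bfZl !bfZr fwb (bf_sym _ _ (proj1 hM)) fwb -/d -/x.
move=> h; nra.
Qed.



Definition ECm (R : realType) (T : topologicalType) a b (F : T -> 'M[R]_(a, b)) :=
  forall i j, continuous (fun t => F t i j).

Lemma cont_sum (R : realType) (T : topologicalType) k (f : 'I_k -> T -> R) :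
  (forall i, continuous (f i)) -> continuous (fun t => \sum_(i < k) f i t).
Proof.
elim: k f => [|k IH] f hf.
  under eq_fun do rewrite big_ord0; exact: cst_continuous.
under eq_fun do rewrite big_ord_recr /=.
move=> x; exact: (@continuousD _ _ _ (fun t => \sum_(i < k) f (widen_ord (leqnSn k) i) t) (f ord_max) x (IH _ (fun i => hf _) x) (hf _ x)).
Qed.

Lemma cont_mul (R : realType) (T : topologicalType) (f g : T -> R) :
  continuous f -> continuous g -> continuous (fun t => f t * g t).
Proof. by move=> hf hg x; exact: (@continuousM _ _ f g x (hf x) (hg x)). Qed.

Lemma EC_mul (R : realType) (T : topologicalType) a b c (F : T -> 'M[R]_(a, b)) (G : T -> 'M[R]_(b, c)) :
  ECm F -> ECm G -> ECm (fun t => F t *m G t).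
Proof.
move=> hF hG i j; under eq_fun do rewrite mxE.
by apply: cont_sum => l; apply: cont_mul.
Qed.

Lemma EC_add (R : realType) (T : topologicalType) a b (F G : T -> 'M[R]_(a, b)) :
  ECm F -> ECm G -> ECm (fun t => F t + G t).
Proof.
move=> hF hG i j; under eq_fun do rewrite mxDE.
by move=> x; exact: (@continuousD _ _ _ (fun t => F t i j) (fun t => G t i j) x (hF i j x) (hG i j x)).
Qed.

Lemma EC_cst (R : realType) (T : topologicalType) a b (M : 'M[R]_(a, b)) :
  ECm (fun _ : T => M).
Proof. by move=> i j; exact: cst_continuous. Qed.

Lemma EC_tr (R : realType) (T : topologicalType) a b (F : T -> 'M[R]_(a, b)) :
  ECm F -> ECm (fun t => (F t)^T).
Proof. by move=> hF i j; under eq_fun do rewrite mxE; exact: hF. Qed.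

Lemma cont_absB (R : realType) (T : topologicalType) (f : T -> R) c :
  continuous f -> continuous (fun t => `| f t - c |).
Proof.
move=> hf x.
apply: (continuous_comp (f := fun t => f t - c) (g := Num.Def.normr)).
  exact: (@continuousD _ _ _ f (fun=> - c) x (hf x) (@cst_continuous T R (- c) x)).
exact: (@norm_continuous R R (f x - c)).
Qed.


Lemma EC_traj (R : realType) n m (A : 'M[R]_n) (B : 'M[R]_(n, m)) (T : topologicalType)
  (ut : T -> nat -> 'cV[R]_m) xt :
  (forall k, ECm (fun t => ut t k)) -> forall k, ECm (fun t => traj A B xt (ut t) k).
Proof.
move=> hu; elim=> [|k IH]; first exact: EC_cst.
have h := (EC_add (EC_mul (EC_cst (T:=T) (M:=A)) IH) (EC_mul (EC_cst (T:=T) (M:=B)) (hu k))).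
exact: h.
Qed.

Lemma cont_stage (R : realType) n m p (C : 'M[R]_(p, n)) (Q : 'M[R]_p) (Rw : 'M[R]_m)
  (T : topologicalType) (X : T -> 'cV[R]_n) (Y : T -> 'cV[R]_m) :
  ECm X -> ECm Y -> continuous (fun t => stage C Q Rw (X t) (Y t)).
Proof.
move=> hX hY; rewrite /stage.
have := EC_add (EC_mul (EC_mul (EC_mul (EC_mul (EC_tr hX) (EC_cst (T:=T) (M:=C^T))) (EC_cst (T:=T) (M:=Q))) (EC_cst (T:=T) (M:=C))) hX)
  (EC_mul (EC_mul (EC_tr hY) (EC_cst (T:=T) (M:=Rw))) hY).
by move=> /(_ 0 0).
Qed.

Definition Qpart (R : realType) n p (C : 'M[R]_(p, n)) (Q : 'M[R]_p) (x : 'cV[R]_n) : R :=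
  (x^T *m C^T *m Q *m C *m x) 0 0.

Lemma Qpart_ge0 (R : realType) n p (x : 'cV[R]_n) (C : 'M[R]_(p, n)) (Q : 'M[R]_p) :
  posdef Q -> 0 <= Qpart C Q x.
Proof.
move=> [_ hQ]; rewrite /Qpart.
have -> : x^T *m C^T *m Q *m C *m x = (C *m x)^T *m Q *m (C *m x) by rewrite trmx_mul !mulmxA.
have [->|nz] := eqVneq (C *m x) 0; first by rewrite mulmx0 mxE.
exact/ltW/hQ.
Qed.

Lemma abs_le_sq1 (R : realType) (x : R) : `|x| <= x ^+ 2 + 1.
Proof.
rewrite -real_normK ?num_real //; have := normr_ge0 x; set t := `|x|; nra.
Qed.

Lemma opt_exists (R : realType) n m p (A : 'M[R]_n) (B : 'M[R]_(n, m)) (C : 'M[R]_(p, n))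
  (Q : 'M[R]_p) (Rw : 'M[R]_m) (xss : 'cV[R]_n) (uss : 'cV[R]_m) xt :
  posdef Q -> posdef Rw -> Vopt A B C Q Rw xss uss xt \is a fin_num ->
  exists ut, (Jcost A B C Q Rw xss uss xt ut <= Vopt A B C Q Rw xss uss xt)%E.
Proof.
move=> hQ hR hfin.
set v := fine (Vopt A B C Q Rw xss uss xt).
have Vv : Vopt A B C Q Rw xss uss xt = v%:E by rewrite /v fineK.
pose I := (nat * 'I_m)%type.
pose U (g : {ptws I -> R}) k : 'cV[R]_m := \col_i g (k, i).
have /choice [d hd] : forall i : 'I_m, exists d : R,
    0 < d /\ forall w : 'cV[R]_m, (w i 0) ^+ 2 <= bf Rw w w * d.
  by move=> i; have [d d0 h] := CS_bound i hR; exists d.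
set Css := stage C Q Rw xss uss.
pose Mb := Css + v + 1.
pose r (i : I) := Mb * d i.2 + 1 + `|uss i.2 0|.
pose parts N (g : {ptws I -> R}) := \sum_(k < N) term A B C Q Rw xss uss xt (U g) k.
have tge0 ut k : 0 <= term A B C Q Rw xss uss xt ut k by rewrite /term.
have partsJ ut N : ((\sum_(k < N) term A B C Q Rw xss uss xt ut k)%:E <= Jcost A B C Q Rw xss uss xt ut)%E.
  rewrite JcostE -sumEFin -(big_mkord xpredT (fun k => (term A B C Q Rw xss uss xt ut k)%:E)).
  by apply: nneseries_lim_ge => *; rewrite lee_fin.
have [g hg] : exists g, (Jcost A B C Q Rw xss uss xt (U g) <= v%:E)%E.
  apply: (@exist_min R I r (fun g => Jcost A B C Q Rw xss uss xt (U g)) parts v).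
  - have hU k : ECm (fun g : {ptws I -> R} => U g k).
      move=> i j.
      suff -> : (fun g : {ptws I -> R} => U g k i j) = @proj I (fun _ => R) (k, i).
        exact: (@proj_continuous I (fun _ => R) (k, i)).
      by apply: funext => g; rewrite /U mxE.
    move=> N; rewrite /parts.
    apply: (@cont_sum R _ N (fun k (g : {ptws I -> R}) => term A B C Q Rw xss uss xt (U g) k)) => k.
    rewrite /term; apply: cont_absB; apply: cont_stage.
      apply: EC_add; last exact: EC_cst.
      apply: (EC_traj (A:=A) (B:=B) (xt:=xt) hU).
    exact: (EC_add (hU k) (EC_cst (M:=uss))).
  - by move=> g N; exact: partsJ.
  - move=> g c hc; rewrite JcostE.
    apply: (lime_le _); first by apply: is_cvg_nneseries => *; rewrite lee_fin.
    by apply: nearW => N; rewrite big_mkord sumEFin; exact: hc N.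
  - move=> e e0.
    have e'0 : 0 < Num.min e 1 by rewrite lt_min e0 ltr01.
    have [y [ut _ <-] hy] := lb_ereal_inf_adherent e'0 hfin.
    rewrite -/(Vopt A B C Q Rw xss uss xt) Vv in hy.
    pose g : {ptws I -> R} := fun ik : I => ut ik.1 ik.2 0.
    have Ug : U g = ut.
      by apply: funext => k; apply/matrixP => i j; rewrite /U mxE ord1.
    exists g; rewrite Ug; split; last first.
      apply: (le_trans (ltW hy)); rewrite -EFinD lee_fin lerD2l; by rewrite ge_min lexx.
    move=> [k i] /=.
    have J1 : (Jcost A B C Q Rw xss uss xt ut <= (v + 1)%:E)%E.
      apply: (le_trans (ltW hy)); rewrite -EFinD lee_fin lerD2l; by rewrite ge_min lexx orbT.
    have tk : term A B C Q Rw xss uss xt ut k <= v + 1.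
      rewrite -lee_fin; apply: le_trans J1; apply: le_trans (partsJ ut k.+1).
      rewrite lee_fin big_ord_recr /= lerDr; exact: sumr_ge0.
    set w := ut k + uss.
    have sw : stage C Q Rw (traj A B xt ut k + xss) w = Qpart C Q (traj A B xt ut k + xss) + bf Rw w w.
      by rewrite /stage mxDE.
    have q0 := Qpart_ge0 (traj A B xt ut k + xss) C hQ.
    have bfM : bf Rw w w <= Mb.
      move: tk; rewrite /term -/w sw -/Css /Mb => tk.
      have := ler_norm (Qpart C Q (traj A B xt ut k + xss) + bf Rw w w - Css); lra.
    have [di hdi] := hd i.
    have wi : (w i 0) ^+ 2 <= Mb * d i.
      apply: (le_trans (hdi w)); rewrite ler_pM2r //.
    have uki : ut k i 0 = w i 0 - uss i 0 by rewrite /w mxDE addrK.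
    rewrite /g /r /= uki; apply: (le_trans (ler_normB _ _)); rewrite lerD2r.
    have := abs_le_sq1 (w i 0); lra.
by exists (U g); rewrite Vv.
Qed.

Local Close Scope classical_set_scope.

Theorem lemma1 (R : realType) (n m p : nat)
  (A : 'M[R]_n) (B : 'M[R]_(n, m)) (C : 'M[R]_(p, n))
  (Q : 'M[R]_p) (Rw : 'M[R]_m) (sqrtQ : 'M[R]_p)
  (rss : 'cV[R]_p) (xss : 'cV[R]_n) (uss : 'cV[R]_m) :
  posdef Q -> posdef Rw ->
  possemidef sqrtQ -> sqrtQ *m sqrtQ = Q ->
  observable A (sqrtQ *m C) ->
  controllable A B ->
  block_mx (A - 1%:M) B C 0 *m col_mx xss uss = col_mx 0 rss ->
  let V := Vopt A B C Q Rw xss uss in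
  (forall xt : 'cV[R]_n, V xt \is a fin_num) /\
  (forall xt : 'cV[R]_n,
     (exists u : 'cV[R]_m,
        V xt = ((`| stage C Q Rw (xt + xss) u - stage C Q Rw xss uss |)%:E
                + V (A *m xt + B *m (u - uss))%R)%E) /\
     (forall u : 'cV[R]_m,
        (V xt <= (`| stage C Q Rw (xt + xss) u - stage C Q Rw xss uss |)%:E
                + V (A *m xt + B *m (u - uss))%R)%E)).
Proof.
move=> hQ hR _ _ _ hc _ V.
have fin : forall xt, V xt \is a fin_num.
  move=> xt; have [ut hut] := J_fin_exists C Q Rw xss uss hc xt.
  rewrite ge0_fin_numE ?V_ge0 //.
  apply: (le_lt_trans (V_le A B C Q Rw xss uss xt ut)).
  by move: hut; rewrite ge0_fin_numE ?J_ge0.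
split => // xt; split; last by move=> u; exact: bellman_le.
have [ut hut] := opt_exists (A:=A) (B:=B) (xss:=xss) (uss:=uss) (xt:=xt) hQ hR (fin xt).
exists (ut 0%N + uss).
apply/le_anti/andP; split; first exact: bellman_le.
rewrite addrK; apply: (le_trans _ hut); rewrite Jshift.
by rewrite leeD2l // V_le.
Qed.
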